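(* Let $a,b\in\alpha$ and let $w_{a,b}$ be the nanoword $(\{A,B\},ABAB)$ with $|A|=a$, $|B|=b$. The group of homotopy automorphisms of $w_{a,b}$ is the full group of $\tau$-equivariant bijections $\alpha\to\alpha$ if $a=\tau(b)$, and is the subgroup of $\tau$-equivariant bijections $f$ with $f(a)=a$ and $f(b)=b$ if $a\neq\tau(b)$.
   Context: Fix a set $\alpha$ with an involution $\tau$. An $\alpha$-alphabet is a set $\mathcal A$ with a map $p:\mathcal A\to\alpha$, $A\mapsto|A|$. A nanoword over $\alpha$ is a pair $(\mathcal A,w)$ with $\mathcal A$ a finite $\alpha$-alphabet and $w$ a word in which each letter occurs exactly twice. Isomorphism: bijection of alphabets preserving $|\cdot|$ carrying one word to the other letterwise. Homotopy moves ($x,y,z,t$ words in the remaining letters): (1) $(\mathcal A,xAAy)\mapsto(\mathcal A\setminus\{A\},xy)$; (2) $(\mathcal A,xAByBAz)\mapsto(\mathcal A\setminus\{A,B\},xyz)$ if $|B|=\tau(|A|)$; (3) $(\mathcal A,xAByACzBCt)\mapsto(\mathcal A,xBAyCAzCBt)$ if $A,B,C$ distinct with $|A|=|B|=|C|$. Homotopy ($\simeq$) is generated by isomorphisms, these moves and inverses. For a bijection $f:\alpha\to\alpha$ and a nanoword $(\mathcal A,p,w)$, let $f_\#(w)=(\mathcal A,f\circ p,w)$. A homotopy automorphism of $w$ is a $\tau$-equivariant bijection $f:\alpha\to\alpha$ (i.e. $f\tau=\tau f$) such that $f_\#(w)\simeq w$; these form a group under composition. *)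

(* Defs.v *)
From mathcomp Require Import all_boot.
From Stdlib Require Import Relations.Relation_Operators.
Set Implicit Arguments. Unset Strict Implicit. Unset Printing Implicit Defensive.

(* Letters are natural numbers; the alphabet of a
   nanoword is the set of letters occurring in its word (each letter of the
   alphabet occurs exactly twice, so the alphabet is determined by the word).
   The map |.| : A -> alpha is given by [lab] (its values on letters not
   occurring in the word are irrelevant). *)
Record nanoword (alpha : Type) := Nanoword { nw_word : seq nat ; nw_lab : nat -> alpha }.

Definition wf_nanoword (alpha : Type) (w : nanoword alpha) : Prop :=
  forall x, x \in nw_word w -> count_mem x (nw_word w) = 2.

Inductive nw_step (alpha : Type) (tau : alpha -> alpha) :
    nanoword alpha -> nanoword alpha -> Prop :=
| step_iso (w1 w2 : nanoword alpha) (g : nat -> nat) :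
    wf_nanoword w1 ->
    {in nw_word w1 &, injective g} ->
    map g (nw_word w1) = nw_word w2 ->
    (forall x, x \in nw_word w1 -> nw_lab w2 (g x) = nw_lab w1 x) ->
    nw_step tau w1 w2
| step_move1 (lab : nat -> alpha) (A : nat) (x y : seq nat) :
    wf_nanoword (Nanoword (x ++ [:: A; A] ++ y) lab) ->
    nw_step tau (Nanoword (x ++ [:: A; A] ++ y) lab) (Nanoword (x ++ y) lab)
| step_move2 (lab : nat -> alpha) (A B : nat) (x y z : seq nat) :
    wf_nanoword (Nanoword (x ++ [:: A; B] ++ y ++ [:: B; A] ++ z) lab) ->
    lab B = tau (lab A) ->
    nw_step tau (Nanoword (x ++ [:: A; B] ++ y ++ [:: B; A] ++ z) lab)
                (Nanoword (x ++ y ++ z) lab)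
| step_move3 (lab : nat -> alpha) (A B C : nat) (x y z t : seq nat) :
    wf_nanoword (Nanoword (x ++ [:: A; B] ++ y ++ [:: A; C] ++ z ++ [:: B; C] ++ t) lab) ->
    A <> B -> A <> C -> B <> C ->
    lab A = lab B -> lab B = lab C ->
    nw_step tau (Nanoword (x ++ [:: A; B] ++ y ++ [:: A; C] ++ z ++ [:: B; C] ++ t) lab)
                (Nanoword (x ++ [:: B; A] ++ y ++ [:: C; A] ++ z ++ [:: C; B] ++ t) lab).

Definition nw_homotopic (alpha : Type) (tau : alpha -> alpha) :
    nanoword alpha -> nanoword alpha -> Prop :=
  clos_refl_sym_trans (nanoword alpha) (@nw_step alpha tau).

Definition nw_push (alpha : Type) (f : alpha -> alpha) (w : nanoword alpha) :=
  Nanoword (nw_word w) (f \o nw_lab w).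

Definition tau_equivariant_bij (alpha : Type) (tau f : alpha -> alpha) : Prop :=
  bijective f /\ forall x, f (tau x) = tau (f x).

Definition homotopy_automorphism (alpha : Type) (tau : alpha -> alpha)
    (w : nanoword alpha) (f : alpha -> alpha) : Prop :=
  tau_equivariant_bij tau f /\ nw_homotopic tau (nw_push f w) w.

(* w_{a,b} = ({A,B}, ABAB) with A = 0, B = 1, |A| = a, |B| = b. *)
Definition w_ab (alpha : Type) (a b : alpha) : nanoword alpha :=
  Nanoword [:: 0; 1; 0; 1] (fun n => if n == 0 then a else b).

(* Main.v *)
Require Import Defs.
From mathcomp Require Import all_boot.
From mathcomp Require Import all_algebra.
From mathcomp Require Import zify ring lra.
From Stdlib Require Import ClassicalEpsilon.
From Stdlib Require Import Relations.Relation_Operators.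
Set Implicit Arguments. Unset Strict Implicit. Unset Printing Implicit Defensive.
Import GRing.Theory Num.Theory.

Definition fl (w : seq nat) (A C : nat) := filter (fun x => (x == A) || (x == C)) w.
Definition ordw (w : seq nat) (A C : nat) : bool :=
  (A != C) && (fl w A C == [:: A; C; A; C]).

Lemma flC w A C : fl w A C = fl w C A.
Proof. by apply: eq_filter => x; rewrite orbC. Qed.

Lemma fl_cat w1 w2 A C : fl (w1 ++ w2) A C = fl w1 A C ++ fl w2 A C.
Proof. exact: filter_cat. Qed.

Lemma fl_nil l A C : A \notin l -> C \notin l -> fl l A C = [::].
Proof.
elim: l => //= e l IH; rewrite !inE !negb_or => /andP[eA nA] /andP[eC nC].
by rewrite eq_sym (negbTE eA) eq_sym (negbTE eC) IH.
Qed.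

Lemma fl_cons e l A C : fl (e :: l) A C = if (e == A) || (e == C) then e :: fl l A C else fl l A C.
Proof. by []. Qed.

Lemma alt_noadj (X Y Z : nat) (l1 l2 : seq nat) : X != Y -> l1 ++ Z :: Z :: l2 != [:: X; Y; X; Y].
Proof.
move=> XY; apply/eqP => H; apply: (negP XY); apply/eqP.
case: l1 H => [|a [|b [|c [|d l]]]] //=; last by case: l.
all: case=> *; congruence.
Qed.

Lemma nseq_pat (X Y C n1 n2 n3 : nat) : X != C -> Y != C ->
  ((nseq n1 C ++ X :: nseq n2 C ++ X :: nseq n3 C == [:: X; C; X; C]) =
   (nseq n1 C ++ Y :: nseq n2 C ++ Y :: nseq n3 C == [:: Y; C; Y; C])) /\
  ((nseq n1 C ++ X :: nseq n2 C ++ X :: nseq n3 C == [:: C; X; C; X]) =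
   (nseq n1 C ++ Y :: nseq n2 C ++ Y :: nseq n3 C == [:: C; Y; C; Y])).
Proof.
move=> XC YC; have CX := XC; have CY := YC; rewrite eq_sym in CX; rewrite eq_sym in CY.
case: n1 => [|[|[|n1]]]; case: n2 => [|[|[|n2]]]; case: n3 => [|[|[|n3]]];
  (split; rewrite /= !eqseq_cons /= ?eqxx ?(negbTE XC) ?(negbTE YC) ?(negbTE CX) ?(negbTE CY) ?andbF ?andbT //).
Qed.

Section Inv.
Variable alpha : Type.
Variable tau : alpha -> alpha.
Local Open Scope ring_scope.

Definition b2z (b : bool) : int := if b then 1 else 0.
Definition sgn (w : seq nat) (A C : nat) : int := b2z (ordw w A C) - b2z (ordw w C A).
Definition lk (lab : nat -> alpha) (rho : alpha -> int) w A :=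
  \sum_(C <- undup w) sgn w A C * rho (lab C).
Definition Phi lab (chi rho : alpha -> int) (P : int -> int) w :=
  \sum_(A <- undup w) chi (lab A) * P (lk lab rho w A).
Definition Psi lab (W : alpha -> alpha -> bool) w : nat :=
  (\sum_(A <- undup w) \sum_(C <- undup w) (ordw w A C && W (lab A) (lab C)))%N.

Variables (chi rho : alpha -> int) (P : int -> int) (W : alpha -> alpha -> bool).
Hypothesis chi_odd : forall x, chi (tau x) = - chi x.
Hypothesis P0 : P 0 = 0.
Hypothesis Prho : forall v x, P (v + (rho x + rho (tau x))) = P v.
Hypothesis Wt1 : forall x y, W (tau x) y = W x y.
Hypothesis Wt2 : forall x y, W x (tau y) = W x y.
Hypothesis Wd : forall x, W x x = false.

Lemma sgn_eq w1 w2 A C : ordw w1 A C = ordw w2 A C -> ordw w1 C A = ordw w2 C A ->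
  sgn w1 A C = sgn w2 A C.
Proof. by rewrite /sgn => -> ->. Qed.

Section M1.
Variables (x y : seq nat) (A : nat).
Let w := x ++ [:: A; A] ++ y.
Let w' := x ++ y.
Hypothesis Anot : A \notin w'.

Lemma m1_fl C D : C != A -> D != A -> fl w C D = fl w' C D.
Proof.
move=> CA DA; rewrite /w /w' !fl_cat; congr (_ ++ _).
by rewrite /fl /= eq_sym (negbTE CA) eq_sym (negbTE DA).
Qed.

Lemma m1_ord C D : C != A -> D != A -> ordw w C D = ordw w' C D.
Proof. by move=> CA DA; rewrite /ordw m1_fl. Qed.

Lemma m1_flA D : fl w A D = fl x A D ++ A :: A :: fl y A D.
Proof. by rewrite /w !fl_cat /fl /= ?eqxx. Qed.

Lemma m1_ordA D : ordw w A D = false /\ ordw w D A = false.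
Proof.
rewrite /ordw; case: (eqVneq A D) => [<-|AD]; first by [].
rewrite /= [fl w D A]flC m1_flA; split; apply/negbTE.
  exact: alt_noadj.
by apply: alt_noadj; rewrite eq_sym.
Qed.

Lemma m1_perm : perm_eq (undup w) (A :: undup w').
Proof.
apply: uniq_perm; first exact: undup_uniq.
  by rewrite /= mem_undup Anot undup_uniq.
by move=> e; rewrite in_cons !mem_undup /w /w' !mem_cat !inE; case: (e == A); case: (e \in x); case: (e \in y).
Qed.

Lemma m1_lkA lab : lk lab rho w A = 0.
Proof.
rewrite /lk big1_seq // => C _.
by rewrite /sgn (m1_ordA C).1 (m1_ordA C).2 /= subr0 mul0r.
Qed.

Lemma m1_lk lab C : C \in w' -> lk lab rho w C = lk lab rho w' C.
Proof.
move=> HC; have CA : C != A by apply: contraNneq Anot => <-.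
rewrite /lk (perm_big _ m1_perm) big_cons /sgn (m1_ordA C).1 (m1_ordA C).2 /= subr0 mul0r add0r.
apply: eq_big_seq => D; rewrite mem_undup => HD.
have DA : D != A by apply: contraNneq Anot => <-.
by rewrite !m1_ord.
Qed.

Lemma m1_Phi lab : Phi lab chi rho P w = Phi lab chi rho P w'.
Proof.
rewrite /Phi (perm_big _ m1_perm) big_cons m1_lkA P0 mulr0 /= add0r.
apply: eq_big_seq => C; rewrite mem_undup => HC; by rewrite m1_lk.
Qed.

Lemma m1_Psi lab : Psi lab W w = Psi lab W w'.
Proof.
rewrite /Psi (perm_big _ m1_perm) big_cons big1_seq ?add0n; last first.
  by move=> D _; rewrite (m1_ordA D).1.
apply: eq_big_seq => C; rewrite mem_undup => HC.
have CA : C != A by apply: contraNneq Anot => <-.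
rewrite (perm_big _ m1_perm) big_cons (m1_ordA C).2 /= add0n.
apply: eq_big_seq => D; rewrite mem_undup => HD.
have DA : D != A by apply: contraNneq Anot => <-.
by rewrite m1_ord.
Qed.
End M1.


Lemma fl_swap l A B C : A \notin l -> B \notin l -> fl l A C = fl l B C.
Proof.
move=> Al Bl; apply: eq_in_filter => e el.
have -> : (e == A) = false by apply/eqP => eA; rewrite -eA el in Al.
have -> : (e == B) = false by apply/eqP => eB; rewrite -eB el in Bl.
by [].
Qed.

Lemma fl_nseq l A C : A \notin l -> fl l A C = nseq (size (fl l A C)) C.
Proof.
move=> Al; apply/all_pred1P; apply/allP => e; rewrite mem_filter.
case/andP => /orP[/eqP eA|eC] el //.
by rewrite -eA el in Al.
Qed.

Lemma Pshift b1 b2 v x : P ((b2z b1 - b2z b2) * (rho x + rho (tau x)) + v) = P v.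
Proof.
have Pm : P (v - (rho x + rho (tau x))) = P v.
  by rewrite -{2}(subrK (rho x + rho (tau x)) v) Prho.
case: b1; case: b2 => /=; rewrite ?sub0r ?subr0 ?subrr ?mul0r ?add0r ?mulN1r ?mul1r //.
- by rewrite addrC Prho.
- by rewrite addrC.
Qed.

Definition tt_ lab w C D : nat := ordw w C D && W (lab C) (lab D).

Section M2.
Variables (x y z : seq nat) (A B : nat).
Let w := x ++ [:: A; B] ++ y ++ [:: B; A] ++ z.
Let w' := x ++ y ++ z.
Hypothesis AB : A != B.
Hypothesis Anot : A \notin w'.
Hypothesis Bnot : B \notin w'.

Let Ax : A \notin x. Proof. by apply: contra Anot; rewrite /w' !mem_cat => ->. Qed.
Let Ay : A \notin y. Proof. by apply: contra Anot; rewrite /w' !mem_cat => ->; rewrite orbT. Qed.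
Let Az : A \notin z. Proof. by apply: contra Anot; rewrite /w' !mem_cat => ->; rewrite !orbT. Qed.
Let Bx : B \notin x. Proof. by apply: contra Bnot; rewrite /w' !mem_cat => ->. Qed.
Let By : B \notin y. Proof. by apply: contra Bnot; rewrite /w' !mem_cat => ->; rewrite orbT. Qed.
Let Bz : B \notin z. Proof. by apply: contra Bnot; rewrite /w' !mem_cat => ->; rewrite !orbT. Qed.
Let BA : B != A. Proof. by rewrite eq_sym. Qed.

Lemma m2_fl C D : C != A -> D != A -> C != B -> D != B -> fl w C D = fl w' C D.
Proof.
move=> CA DA CB DB.
have n1 : fl [:: A; B] C D = [::] by apply: fl_nil; rewrite !inE negb_or ?CA ?CB ?DA ?DB.
have n2 : fl [:: B; A] C D = [::] by apply: fl_nil; rewrite !inE negb_or ?CA ?CB ?DA ?DB.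
by rewrite /w /w' !fl_cat n1 n2.
Qed.

Lemma m2_ord C D : C != A -> D != A -> C != B -> D != B -> ordw w C D = ordw w' C D.
Proof. by move=> CA DA CB DB; rewrite /ordw m2_fl. Qed.

Lemma m2_flAB : fl w A B = [:: A; B; B; A].
Proof.
rewrite /w !fl_cat (fl_nil Ax Bx) (fl_nil Ay By) (fl_nil Az Bz) /fl /=.
by rewrite ?eqxx ?orbT ?(negbTE AB) ?(negbTE BA) /=.
Qed.

Lemma m2_ordAB : ordw w A B = false /\ ordw w B A = false.
Proof.
rewrite /ordw [fl w B A]flC m2_flAB AB BA /=; split; apply/negbTE.
  exact: (@alt_noadj A B B [:: A] [:: A]).
exact: (@alt_noadj B A B [:: A] [:: A]).
Qed.

Lemma m2_flX C : C != A -> C != B ->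
  fl w A C = fl x A C ++ A :: fl y A C ++ A :: fl z A C /\
  fl w B C = fl x B C ++ B :: fl y B C ++ B :: fl z B C.
Proof.
move=> CA CB; have BC : B != C by rewrite eq_sym.
have AC : A != C by rewrite eq_sym.
have e1 : fl [:: A; B] A C = [:: A].
  by rewrite /fl /= ?eqxx /= ?(negbTE BA) ?(negbTE BC) ?(negbTE AB) ?(negbTE AC).
have e2 : fl [:: B; A] A C = [:: A].
  by rewrite /fl /= ?eqxx /= ?(negbTE BA) ?(negbTE BC) ?(negbTE AB) ?(negbTE AC).
have e3 : fl [:: A; B] B C = [:: B].
  by rewrite /fl /= ?eqxx /= ?(negbTE BA) ?(negbTE BC) ?(negbTE AB) ?(negbTE AC) ?orbT.
have e4 : fl [:: B; A] B C = [:: B].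
  by rewrite /fl /= ?eqxx /= ?(negbTE BA) ?(negbTE BC) ?(negbTE AB) ?(negbTE AC) ?orbT.
by rewrite /w !fl_cat e1 e2 e3 e4.
Qed.

Lemma m2_ordX C : C != A -> C != B ->
  ordw w A C = ordw w B C /\ ordw w C A = ordw w C B.
Proof.
move=> CA CB; have [e1 e2] := m2_flX CA CB.
have AC : A != C by rewrite eq_sym.
have BC : B != C by rewrite eq_sym.
rewrite /ordw [fl w C A]flC [fl w C B]flC e1 e2 ?CA ?CB ?AC ?BC /=.
rewrite -(fl_swap C Ax Bx) -(fl_swap C Ay By) -(fl_swap C Az Bz).
rewrite (fl_nseq C Ax) (fl_nseq C Ay) (fl_nseq C Az).
by have [-> ->] := nseq_pat (size (fl x A C)) (size (fl y A C)) (size (fl z A C)) AC BC.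
Qed.

Lemma m2_perm : perm_eq (undup w) (A :: B :: undup w').
Proof.
apply: uniq_perm; first exact: undup_uniq.
  by rewrite /= in_cons negb_or !mem_undup AB Anot Bnot undup_uniq.
move=> e; rewrite !in_cons !mem_undup /w /w' !mem_cat !inE.
by case: (e == A); case: (e == B); case: (e \in x); case: (e \in y); case: (e \in z).
Qed.

Let notAB C : C \in undup w' -> C != A /\ C != B.
Proof.
rewrite mem_undup => HC; split.
  by apply: contraNneq Anot => <-.
by apply: contraNneq Bnot => <-.
Qed.

Lemma m2_lkAB lab : lk lab rho w A = lk lab rho w B.
Proof.
rewrite /lk !(perm_big _ m2_perm) !big_cons.
have [o1 o2] := m2_ordAB.
rewrite /sgn o1 o2 /ordw !eqxx /= !subrr !mul0r !add0r.
apply: eq_big_seq => D HD; have [DA DB] := notAB HD.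
have [e1 e2] := m2_ordX DA DB.
by rewrite -/(ordw w A D) -/(ordw w D A) -/(ordw w B D) -/(ordw w D B) e1 e2.
Qed.

Lemma m2_lk lab C : C \in undup w' -> lab B = tau (lab A) ->
  lk lab rho w C = (b2z (ordw w C A) - b2z (ordw w A C)) * (rho (lab A) + rho (tau (lab A)))
     + lk lab rho w' C.
Proof.
move=> HC labB; have [CA CB] := notAB HC.
rewrite /lk (perm_big _ m2_perm) !big_cons /= addrA.
have [e1 e2] := m2_ordX CA CB.
rewrite /sgn -e1 -e2 labB -mulrDr; congr (_ + _).
apply: eq_big_seq => D HD; have [DA DB] := notAB HD.
by rewrite !m2_ord.
Qed.

Lemma m2_Phi lab : lab B = tau (lab A) -> Phi lab chi rho P w = Phi lab chi rho P w'.
Proof.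
move=> labB; rewrite /Phi (perm_big _ m2_perm) !big_cons /= -m2_lkAB labB chi_odd.
rewrite addrA mulNr subrr add0r.
apply: eq_big_seq => C HC; by rewrite (m2_lk HC labB) Pshift.
Qed.

Lemma m2_Psi lab : lab B = tau (lab A) -> odd (Psi lab W w) = odd (Psi lab W w').
Proof.
move=> labB; have [o1 o2] := m2_ordAB.
have rowC : forall C, C \in undup w' ->
   (\sum_(D <- undup w) (ordw w C D && W (lab C) (lab D)) =
   (ordw w C A && W (lab C) (lab A)) + (ordw w C A && W (lab C) (lab A)) +
   \sum_(D <- undup w') (ordw w' C D && W (lab C) (lab D)))%N.
  move=> C HC; have [CA CB] := notAB HC; have [e1 e2] := m2_ordX CA CB.
  rewrite (perm_big _ m2_perm) !big_cons /= addnA -e2 labB Wt2; congr (_ + _)%N.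
  apply: eq_big_seq => D HD; have [DA DB] := notAB HD.
  by rewrite m2_ord.
have rowB : (\sum_(D <- undup w) (ordw w B D && W (lab B) (lab D)) =
            \sum_(D <- undup w) (ordw w A D && W (lab A) (lab D)))%N.
  rewrite !(perm_big _ m2_perm) !big_cons o1 o2 /ordw !eqxx /=.
  apply: eq_big_seq => D HD; have [DA DB] := notAB HD.
  have [e1 e2] := m2_ordX DA DB.
  by rewrite -/(ordw w A D) -/(ordw w B D) e1 labB Wt1.
rewrite /Psi (perm_big _ m2_perm) !big_cons /= rowB.
rewrite (eq_big_seq _ rowC) !big_split /= !oddD.
by rewrite addbA !addbb.
Qed.
End M2.


Lemma filter_swap2 (p : pred nat) X Y : ~~ (p X && p Y) -> filter p [:: X; Y] = filter p [:: Y; X].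
Proof. by rewrite /=; case: (p X); case: (p Y). Qed.

Lemma pair_in (X Y D E : nat) (s : seq nat) : X != Y -> X \in s -> Y \in s ->
  ~~ ((D \in s) && (E \in s)) -> ~~ (((X == D) || (X == E)) && ((Y == D) || (Y == E))).
Proof.
move=> XY Xs Ys H; apply/negP => /andP[/orP[/eqP eX|/eqP eX] /orP[/eqP eY|/eqP eY]].
- by move: XY; rewrite eX eY eqxx.
- by move: H; rewrite -eX -eY Xs Ys.
- by move: H; rewrite -eX -eY Xs Ys.
- by move: XY; rewrite eX eY eqxx.
Qed.

Section M3.
Variables (x y z t : seq nat) (A B C : nat).
Let w := x ++ [:: A; B] ++ y ++ [:: A; C] ++ z ++ [:: B; C] ++ t.
Let w' := x ++ [:: B; A] ++ y ++ [:: C; A] ++ z ++ [:: C; B] ++ t.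
Let w0 := x ++ y ++ z ++ t.
Let s3 := [:: A; B; C].
Hypothesis AB : A != B.
Hypothesis AC : A != C.
Hypothesis BC : B != C.
Hypothesis Anot : A \notin w0.
Hypothesis Bnot : B \notin w0.
Hypothesis Cnot : C \notin w0.
Let BA : B != A. Proof. by rewrite eq_sym. Qed.
Let CA : C != A. Proof. by rewrite eq_sym. Qed.
Let CB : C != B. Proof. by rewrite eq_sym. Qed.

Lemma m3_fl D E : ~~ ((D \in s3) && (E \in s3)) -> fl w D E = fl w' D E.
Proof.
move=> H; have As : A \in s3 by rewrite !inE eqxx.
have Bs : B \in s3 by rewrite !inE eqxx orbT.
have Cs : C \in s3 by rewrite !inE eqxx !orbT.
rewrite /w /w' !fl_cat /fl.
rewrite (filter_swap2 (pair_in AB As Bs H)) (filter_swap2 (pair_in AC As Cs H)).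
by rewrite (filter_swap2 (pair_in BC Bs Cs H)).
Qed.

Lemma m3_ord D E : ~~ ((D \in s3) && (E \in s3)) -> ordw w D E = ordw w' D E.
Proof. by move=> H; rewrite /ordw m3_fl. Qed.

Let memw0 e : e \in w0 -> e \notin s3.
Proof.
move=> He; rewrite !inE !negb_or; apply/and3P; split.
- by apply: contraNneq Anot => <-.
- by apply: contraNneq Bnot => <-.
- by apply: contraNneq Cnot => <-.
Qed.

Lemma m3_flw X Y : X \in s3 -> Y \in s3 ->
  fl w X Y = fl [:: A; B; A; C; B; C] X Y /\ fl w' X Y = fl [:: B; A; C; A; C; B] X Y.
Proof.
move=> Xs Ys.
have nX : forall l, (forall e, e \in l -> e \in w0) -> fl l X Y = [::].
  move=> l Hl; apply: fl_nil; apply/negP => /Hl /memw0; by rewrite ?Xs ?Ys.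
have Hx : fl x X Y = [::] by apply: nX => e He; rewrite /w0 !mem_cat He.
have Hy : fl y X Y = [::] by apply: nX => e He; rewrite /w0 !mem_cat He orbT.
have Hz : fl z X Y = [::] by apply: nX => e He; rewrite /w0 !mem_cat He !orbT.
have Ht : fl t X Y = [::] by apply: nX => e He; rewrite /w0 !mem_cat He !orbT.
rewrite /w /w' !fl_cat Hx Hy Hz Ht !cat0s !cats0; split.
  by rewrite -[[:: A; B; A; C; B; C]]/([:: A; B] ++ [:: A; C] ++ [:: B; C]) !fl_cat.
by rewrite -[[:: B; A; C; A; C; B]]/([:: B; A] ++ [:: C; A] ++ [:: C; B]) !fl_cat.
Qed.

Ltac dec3 := rewrite /ordw /fl /= ?eqxx ?(negbTE AB) ?(negbTE BA) ?(negbTE AC) ?(negbTE CA)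
   ?(negbTE BC) ?(negbTE CB) /= ?eqseq_cons ?eqxx ?(negbTE AB) ?(negbTE BA) ?(negbTE AC) ?(negbTE CA)
   ?(negbTE BC) ?(negbTE CB) ?andbF //.

Lemma m3_sgnA : [/\ sgn w A B = 1, sgn w A C = 0, sgn w' A B = 0 & sgn w' A C = 1].
Proof.
have As : A \in s3 by rewrite !inE eqxx.
have Bs : B \in s3 by rewrite !inE eqxx orbT.
have Cs : C \in s3 by rewrite !inE eqxx !orbT.
rewrite /sgn /ordw (m3_flw As Bs).1 (m3_flw As Bs).2 (m3_flw Bs As).1 (m3_flw Bs As).2.
rewrite (m3_flw As Cs).1 (m3_flw As Cs).2 (m3_flw Cs As).1 (m3_flw Cs As).2.
split; dec3.
Qed.


Lemma m3_sgnB : sgn w B C = 1 /\ sgn w' B C = 0.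
Proof.
have Bs : B \in s3 by rewrite !inE eqxx orbT.
have Cs : C \in s3 by rewrite !inE eqxx !orbT.
rewrite /sgn /ordw (m3_flw Bs Cs).1 (m3_flw Bs Cs).2 (m3_flw Cs Bs).1 (m3_flw Cs Bs).2.
split; dec3.
Qed.

Lemma m3_perm : perm_eq (undup w) (A :: B :: C :: undup w0) /\
                perm_eq (undup w') (A :: B :: C :: undup w0).
Proof.
have U : uniq (A :: B :: C :: undup w0).
  by rewrite /= !in_cons !negb_or !mem_undup AB AC BC Anot Bnot Cnot undup_uniq.
split; (apply: uniq_perm; [exact: undup_uniq | exact: U | ]);
move=> e; rewrite !in_cons !mem_undup /w /w' /w0 !mem_cat !inE;
by case: (e == A); case: (e == B); case: (e == C); case: (e \in x); case: (e \in y);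
   case: (e \in z); case: (e \in t).
Qed.

Lemma sgn_anti v D E : sgn v D E = - sgn v E D.
Proof. by rewrite /sgn opprB. Qed.

Lemma sgn_diag v D : sgn v D D = 0.
Proof. by rewrite /sgn subrr. Qed.

Lemma m3_lk lab : lab A = lab B -> lab B = lab C ->
  forall D, lk lab rho w D = lk lab rho w' D.
Proof.
move=> lAB lBC D.
have tailE : forall D, \sum_(E <- undup w0) sgn w D E * rho (lab E) =
                       \sum_(E <- undup w0) sgn w' D E * rho (lab E).
  move=> D'; apply: eq_big_seq => E; rewrite mem_undup => /memw0 HE.
  by congr (_ * _); apply: sgn_eq; apply: m3_ord; rewrite (negbTE HE) ?andbF.
rewrite /lk (perm_big _ m3_perm.1) (perm_big _ m3_perm.2).
case: (boolP (D \in s3)) => Ds; last first.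
  apply: eq_big_seq => E _; congr (_ * _); apply: sgn_eq; apply: m3_ord; by rewrite (negbTE Ds) ?andbF.
rewrite !big_cons /= tailE.
rewrite !addrA; congr (_ + _); rewrite -lBC -lAB.
have [sAB sAC sAB' sAC'] := m3_sgnA; have [sBC sBC'] := m3_sgnB.
move: Ds; rewrite !inE => /or3P[] /eqP ->;
rewrite !sgn_diag ?sAB ?sAC ?sAB' ?sAC' ?sBC ?sBC';
rewrite ?(sgn_anti w B A) ?(sgn_anti w C A) ?(sgn_anti w C B);
rewrite ?(sgn_anti w' B A) ?(sgn_anti w' C A) ?(sgn_anti w' C B);
rewrite ?sAB ?sAC ?sAB' ?sAC' ?sBC ?sBC'; ring.
Qed.

Lemma m3_tt lab : lab A = lab B -> lab B = lab C ->
  forall D E, (ordw w D E && W (lab D) (lab E)) = (ordw w' D E && W (lab D) (lab E)).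
Proof.
move=> lAB lBC D E.
case: (boolP ((D \in s3) && (E \in s3))) => H; last by rewrite m3_ord.
have lD : forall F, F \in s3 -> lab F = lab A.
  by move=> F; rewrite !inE => /or3P[] /eqP ->; rewrite ?lAB ?lBC.
case/andP: H => /lD -> /lD ->; by rewrite Wd !andbF.
Qed.

Lemma m3_Phi lab : lab A = lab B -> lab B = lab C ->
  Phi lab chi rho P w = Phi lab chi rho P w'.
Proof.
move=> lAB lBC; have pw : perm_eq (undup w) (undup w').
  by apply: (perm_trans m3_perm.1); rewrite perm_sym; exact: m3_perm.2.
rewrite /Phi (perm_big _ pw); apply: eq_bigr => D _.
by rewrite (m3_lk lAB lBC).
Qed.

Lemma m3_Psi lab : lab A = lab B -> lab B = lab C ->
  Psi lab W w = Psi lab W w'.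
Proof.
move=> lAB lBC; have pw : perm_eq (undup w) (undup w').
  by apply: (perm_trans m3_perm.1); rewrite perm_sym; exact: m3_perm.2.
rewrite /Psi (perm_big _ pw); apply: eq_bigr => D _.
rewrite (perm_big _ pw); apply: eq_bigr => E _.
by rewrite (m3_tt lAB lBC).
Qed.
End M3.

Ltac cnt := repeat match goal with |- context [count_mem ?a ?l] =>
  let c := fresh "c" in set c := count_mem a l; clearbody c end; lia.

Section Iso.
Variables (w1 : seq nat) (g : nat -> nat).
Hypothesis ginj : {in w1 &, injective g}.

Lemma iso_ord D E : D \in w1 -> E \in w1 -> ordw (map g w1) (g D) (g E) = ordw w1 D E.
Proof.
move=> Dw Ew.
have fE : fl (map g w1) (g D) (g E) = map g (fl w1 D E).
  rewrite /fl filter_map; congr map; apply: eq_in_filter => e He /=.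
  by rewrite !(inj_in_eq ginj).
rewrite /ordw fE (inj_in_eq ginj) //.
have -> : [:: g D; g E; g D; g E] = map g [:: D; E; D; E] by [].
rewrite (inj_in_eq (inj_in_map ginj)) //.
  by rewrite inE; apply/allP => e; rewrite mem_filter => /andP[].
by rewrite inE /= Dw Ew.
Qed.

Lemma iso_perm : perm_eq (undup (map g w1)) (map g (undup w1)).
Proof.
apply: uniq_perm; first exact: undup_uniq.
  rewrite map_inj_in_uniq ?undup_uniq //.
  by move=> a b; rewrite !mem_undup; apply: ginj.
by move=> e; rewrite mem_undup (eq_mem_map g (mem_undup w1)).
Qed.

Variables (lab1 lab2 : nat -> alpha).
Hypothesis glab : forall e, e \in w1 -> lab2 (g e) = lab1 e.

Lemma iso_lk D : D \in w1 -> lk lab2 rho (map g w1) (g D) = lk lab1 rho w1 D.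
Proof.
move=> Dw; rewrite /lk (perm_big _ iso_perm) big_map.
apply: eq_big_seq => E; rewrite mem_undup => Ew.
by rewrite /sgn !iso_ord // glab.
Qed.

Lemma iso_Phi : Phi lab2 chi rho P (map g w1) = Phi lab1 chi rho P w1.
Proof.
rewrite /Phi (perm_big _ iso_perm) big_map.
apply: eq_big_seq => D; rewrite mem_undup => Dw.
by rewrite iso_lk // glab.
Qed.

Lemma iso_Psi : Psi lab2 W (map g w1) = Psi lab1 W w1.
Proof.
rewrite /Psi (perm_big _ iso_perm) big_map.
apply: eq_big_seq => D; rewrite mem_undup => Dw.
rewrite (perm_big _ iso_perm) big_map.
apply: eq_big_seq => E; rewrite mem_undup => Ew.
by rewrite iso_ord // !glab.
Qed.
End Iso.

Lemma step_inv w1 w2 : nw_step tau w1 w2 ->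
  Phi (nw_lab w1) chi rho P (nw_word w1) = Phi (nw_lab w2) chi rho P (nw_word w2) /\
  odd (Psi (nw_lab w1) W (nw_word w1)) = odd (Psi (nw_lab w2) W (nw_word w2)).
Proof.
case.
- move=> v1 v2 g _ ginj <- glab.
  by rewrite (iso_Phi ginj glab) (iso_Psi ginj glab).
- move=> lab A x y wf /=.
  have := wf A; rewrite /= !(mem_cat, inE, eqxx, orbT) /= => /(_ isT) hA.
  rewrite /= !count_cat /= ?count_cat /= ?count_cat /= ?count_cat /= ?eqxx /= in hA.
  have An : A \notin x ++ y.
    by apply/count_memPn; rewrite count_cat; move: hA; cnt.
  by rewrite m1_Phi // m1_Psi.
- move=> lab A B x y z wf /= labB.
  have := wf A; rewrite /= !(mem_cat, inE, eqxx, orbT) /= => /(_ isT) hA.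
  rewrite /= !count_cat /= ?count_cat /= ?count_cat /= ?count_cat /= ?eqxx /= in hA.
  have := wf B; rewrite /= !(mem_cat, inE, eqxx, orbT) /= => /(_ isT) hB.
  rewrite /= !count_cat /= ?count_cat /= ?count_cat /= ?count_cat /= ?eqxx /= in hB.
  have AB : A != B.
    by apply/negP => /eqP e; move: hA; rewrite e eqxx /=; cnt.
  move: hA hB; rewrite eq_sym (negbTE AB) /= => hA hB.
  have An : A \notin x ++ y ++ z.
    by apply/count_memPn; rewrite !count_cat; move: hA hB; cnt.
  have Bn : B \notin x ++ y ++ z.
    by apply/count_memPn; rewrite !count_cat; move: hA hB; cnt.
  by rewrite m2_Phi // m2_Psi.
- move=> lab A B C x y z t wf /eqP AB /eqP AC /eqP BC lAB lBC /=.
  have := wf A; rewrite /= !(mem_cat, inE, eqxx, orbT) /= => /(_ isT) hA.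
  rewrite /= !count_cat /= ?count_cat /= ?count_cat /= ?count_cat /= ?eqxx /= in hA.
  have := wf B; rewrite /= !(mem_cat, inE, eqxx, orbT) /= => /(_ isT) hB.
  rewrite /= !count_cat /= ?count_cat /= ?count_cat /= ?count_cat /= ?eqxx /= in hB.
  have := wf C; rewrite /= !(mem_cat, inE, eqxx, orbT) /= => /(_ isT) hC.
  rewrite /= !count_cat /= ?count_cat /= ?count_cat /= ?count_cat /= ?eqxx /= in hC.
  have eAB := negbTE AB; have eAC := negbTE AC; have eBC := negbTE BC.
  have eBA : (B == A) = false by rewrite eq_sym.
  have eCA : (C == A) = false by rewrite eq_sym.
  have eCB : (C == B) = false by rewrite eq_sym.
  rewrite ?eAB ?eAC ?eBC ?eBA ?eCA ?eCB /= in hA hB hC.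
  have An : A \notin x ++ y ++ z ++ t.
    by apply/count_memPn; rewrite !count_cat; move: hA hB hC; cnt.
  have Bn : B \notin x ++ y ++ z ++ t.
    by apply/count_memPn; rewrite !count_cat; move: hA hB hC; cnt.
  have Cn : C \notin x ++ y ++ z ++ t.
    by apply/count_memPn; rewrite !count_cat; move: hA hB hC; cnt.
  by rewrite m3_Phi // m3_Psi.
Qed.

Lemma hom_inv w1 w2 : nw_homotopic tau w1 w2 ->
  Phi (nw_lab w1) chi rho P (nw_word w1) = Phi (nw_lab w2) chi rho P (nw_word w2) /\
  odd (Psi (nw_lab w1) W (nw_word w1)) = odd (Psi (nw_lab w2) W (nw_word w2)).
Proof.
elim => [u v /step_inv //| u // | u v _ [-> ->] // | u v r _ [-> ->] _ [-> ->] //].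
Qed.

End Inv.

Section Final.
Variable alpha : Type.
Variable tau : alpha -> alpha.
Hypothesis tau_invol : forall x, tau (tau x) = x.
Local Open Scope ring_scope.

Definition P2 (v : int) : int := (v %% 2)%Z.

Lemma P2_shift v k : P2 (v + k * 2) = P2 v.
Proof. by rewrite /P2 addrC modzMDl. Qed.

Lemma P2_1 : P2 1 = 1. Proof. by []. Qed.
Lemma P2_N1 : P2 (-1) = 1. Proof. by []. Qed.
Lemma P2_0 : P2 0 = 0. Proof. by []. Qed.


Lemma Phi_W4 (L : nat -> alpha) chi rho :
  Phi L chi rho P2 [:: 0%N; 1%N; 0%N; 1%N] = chi (L 0%N) * P2 (rho (L 1%N)) + chi (L 1%N) * P2 (- rho (L 0%N)).
Proof.
rewrite /Phi /lk /= !big_cons !big_nil /= /sgn /ordw /=.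
by rewrite ?subrr ?subr0 ?sub0r ?mul0r ?mul1r ?mulN1r ?add0r ?addr0.
Qed.

Lemma Psi_W4 (L : nat -> alpha) W : odd (Psi L W [:: 0%N; 1%N; 0%N; 1%N]) = W (L 0%N) (L 1%N).
Proof.
rewrite /Psi /= !big_cons !big_nil /= /ordw /=.
by case: (W _ _).
Qed.

Definition dec (Q : Prop) : bool := if excluded_middle_informative Q then true else false.
Lemma decP (Q : Prop) : reflect Q (dec Q).
Proof. by rewrite /dec; case: excluded_middle_informative => H; constructor. Qed.

Definition sz (z x : alpha) : int := if dec (x = z) then 1 else if dec (x = tau z) then -1 else 0.
Definition oz (z x : alpha) : bool := dec (x = z \/ x = tau z).

Lemma oz_tau z x : oz z (tau x) = oz z x.
Proof.
rewrite /oz; case: decP => H; case: decP => H' //; exfalso.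
- apply: H'; case: H => e; [right|left]; by rewrite -(tau_invol x) e ?tau_invol.
- apply: H; case: H' => e; [right|left]; by rewrite e ?tau_invol.
Qed.

Lemma sz_self z : sz z z = 1.
Proof. by rewrite /sz; case: decP. Qed.

Lemma sz_out z x : ~~ oz z x -> sz z x = 0.
Proof.
rewrite /oz /sz; case: decP => // H _.
case: decP => [e|_]; first by case: H; left.
case: decP => [e|_] //; by case: H; right.
Qed.

Lemma sz_one z x : sz z x = 1 -> x = z.
Proof. by rewrite /sz; case: decP => // _; case: decP. Qed.

Lemma sz_odd z : z <> tau z -> forall x, sz z (tau x) = - sz z x.
Proof.
move=> nz x; rewrite /sz.
case: (decP (x = z)) => [->|xz].
  case: decP => [e|_]; first by case: nz.
  by case: decP.
case: (decP (x = tau z)) => [->|xtz].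
  by rewrite tau_invol; case: decP.
case: decP => [e|_]; first by case: xtz; rewrite -e tau_invol.
case: decP => [e|_] //; by case: xz; rewrite -(tau_invol x) e tau_invol.
Qed.

Lemma oz_self z : oz z z.
Proof. by rewrite /oz; case: decP => // - []; left. Qed.

Lemma ozP z x : reflect (x = z \/ x = tau z) (oz z x).
Proof. exact: decP. Qed.

Lemma fix_ab a b f : a <> tau b -> (forall x, f (tau x) = tau (f x)) -> injective f ->
  nw_homotopic tau (nw_push f (w_ab a b)) (w_ab a b) -> f a = a /\ f b = b.
Proof.
move=> ab fe finj H.
have HV : forall chi rho, (forall x, chi (tau x) = - chi x) ->
    (forall x, exists k, rho x + rho (tau x) = k * 2) ->
    chi (f a) * P2 (rho (f b)) + chi (f b) * P2 (- rho (f a)) =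
    chi a * P2 (rho b) + chi b * P2 (- rho a).
  move=> chi rho hc hr.
  have Prho : forall v x, P2 (v + (rho x + rho (tau x))) = P2 v.
    by move=> v x; case: (hr x) => k ->; exact: P2_shift.
  have := (@hom_inv _ _ _ _ _ (fun _ _ => false) hc P2_0 Prho
            (fun _ _ => erefl) (fun _ _ => erefl) (fun _ => erefl) _ _ H).1.
  by rewrite /= !Phi_W4.
have HW : forall W : alpha -> alpha -> bool, (forall x y, W (tau x) y = W x y) ->
    (forall x y, W x (tau y) = W x y) -> (forall x, W x x = false) -> W (f a) (f b) = W a b.
  move=> W h1 h2 h3.
  have hc : forall x, (fun _ : alpha => (0 : int)) (tau x) = - (fun _ => 0) x by move=> x; rewrite oppr0.
  have Prho : forall v x, P2 (v + ((fun _ : alpha => (0:int)) x + (fun _ => 0) (tau x))) = P2 v.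
    by move=> v x /=; rewrite !addr0.
  have := (@hom_inv _ _ _ _ _ W hc P2_0 Prho h1 h2 h3 _ _ H).2.
  by rewrite /= !Psi_W4.
have hr_odd : forall rho : alpha -> int, (forall x, rho (tau x) = - rho x) ->
    forall x, exists k, rho x + rho (tau x) = k * 2.
  by move=> r hr x; exists 0; rewrite hr subrr mul0r.
have hr_oz : forall z x, exists k, b2z (oz z x) + b2z (oz z (tau x)) = k * 2.
  by move=> z x; exists (b2z (oz z x)); rewrite oz_tau; case: (oz z x).
case: (decP (a = b)) => [eab | nab].
  subst b; have nz : a <> tau a by [].
  have := HV (sz a) (sz a) (sz_odd nz) (hr_odd _ (sz_odd nz)).
  rewrite sz_self P2_1 P2_N1.
  case: (boolP (oz a (f a))) => [/ozP [e|e] | no].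
  - by rewrite e.
  - rewrite e (sz_odd nz) sz_self opprK P2_1 P2_N1 => h; exfalso; lia.
  - rewrite (sz_out no) => h; exfalso; lia.
have disj : forall x, oz a x -> oz b x -> False.
  move=> x /ozP [e1|e1] /ozP [e2|e2].
  - by apply: nab; rewrite -e1 -e2.
  - by apply: ab; rewrite -e1 -e2.
  - by apply: ab; rewrite -(tau_invol a) -e1 -e2.
  - by apply: nab; rewrite -(tau_invol a) -(tau_invol b) -e1 -e2.
have Hab : oz a (f a) && oz b (f b) = oz a a && oz b b.
  apply: (HW (fun x y => oz a x && oz b y)) => [x y|x y|x] /=; rewrite ?oz_tau //.
  by apply/negP => /andP [h1 h2]; apply: (disj x).
rewrite !oz_self /= in Hab; case/andP: Hab => oac obd.
have nab' : ~~ oz a b by apply/negP => h; exact: (disj b h (oz_self b)).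
have nba' : ~~ oz b a by apply/negP => h; exact: (disj a (oz_self a) h).
have nafb : ~~ oz a (f b) by apply/negP => h; exact: (disj _ h obd).
have nbfa : ~~ oz b (f a) by apply/negP => h; exact: (disj _ oac h).
split.
  case: (decP (a = tau a)) => [ea | na].
    by case/ozP: oac => ->.
  have := HV (sz a) (fun x => b2z (oz b x)) (sz_odd na) (hr_oz b).
  rewrite sz_self oz_self obd (sz_out nab') (sz_out nafb) P2_1 !mul0r !addr0 mulr1.
  by move/sz_one.
case: (decP (b = tau b)) => [eb | nb].
  by case/ozP: obd => ->.
have := HV (sz b) (fun x => b2z (oz a x)) (sz_odd nb) (hr_oz a).
rewrite sz_self oz_self oac (sz_out nba') (sz_out nbfa) P2_N1 !mul0r !add0r mulr1.
by move/sz_one.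
Qed.



Lemma wf_all (l : seq nat) (L : nat -> alpha) :
  all (fun x => count_mem x l == 2%N) l -> wf_nanoword (Nanoword l L).
Proof. by move/allP => H x /H /eqP. Qed.

Lemma w_triv (u : alpha) (L L' : nat -> alpha) : L 0%N = u -> L 1%N = tau u ->
  nw_homotopic tau (Nanoword [:: 0; 1; 0; 1]%N L) (Nanoword [::] L').
Proof.
move=> L0 L1.
pose M := fun n : nat => if odd n then tau u else u.
apply: (rst_trans _ _ _ (Nanoword [:: 0; 1; 0; 1]%N M)).
  apply: rst_step; apply: (@step_iso _ _ _ _ id).
  - exact: wf_all.
  - by move=> ? ? _ _.
  - by rewrite map_id.
  - by move=> e; rewrite !inE => /orP[/eqP->|/orP[/eqP->|/orP[/eqP->|/eqP->]]].
apply: (rst_trans _ _ _ (Nanoword [:: 2; 3; 0; 1; 3; 2; 0; 1]%N M)).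
  apply: rst_sym; apply: rst_step.
  apply: (@step_move2 _ _ M 2 3 [::] [:: 0; 1]%N [:: 0; 1]%N _ erefl); by [apply: wf_all|].
apply: (rst_trans _ _ _ (Nanoword [:: 2; 4; 5; 3; 0; 1; 3; 2; 0; 1; 5; 4]%N M)).
  apply: rst_sym; apply: rst_step.
  apply: (@step_move2 _ _ M 4 5 [:: 2]%N [:: 3; 0; 1; 3; 2; 0; 1]%N [::] _ erefl); by [apply: wf_all|].
apply: (rst_trans _ _ _ (Nanoword [:: 2; 4; 3; 5; 0; 3; 1; 2; 0; 5; 1; 4]%N M)).
  apply: rst_sym; apply: rst_step.
  apply: (@step_move3 _ _ M 3 5 1 [:: 2; 4]%N [:: 0]%N [:: 2; 0]%N [:: 4]%N); by [apply: wf_all|].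
apply: (rst_trans _ _ _ (Nanoword [:: 2; 4; 3; 3; 1; 2; 1; 4]%N M)).
  apply: rst_step.
  have e : M 0%N = tau (M 5%N) by rewrite /M /= tau_invol.
  apply: (@step_move2 _ _ M 5 0 [:: 2; 4; 3]%N [:: 3; 1; 2]%N [:: 1; 4]%N _ e); by [apply: wf_all|].
apply: (rst_trans _ _ _ (Nanoword [:: 2; 4; 1; 2; 1; 4]%N M)).
  apply: rst_step.
  apply: (@step_move1 _ _ M 3 [:: 2; 4]%N [:: 1; 2; 1; 4]%N); by [apply: wf_all|].
apply: (rst_trans _ _ _ (Nanoword [:: 2; 2]%N M)).
  apply: rst_step.
  apply: (@step_move2 _ _ M 4 1 [:: 2]%N [:: 2]%N [::] _ erefl); by [apply: wf_all|].
apply: (rst_trans _ _ _ (Nanoword [::] M)).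
  apply: rst_step.
  apply: (@step_move1 _ _ M 2 [::] [::]); by [apply: wf_all|].
apply: rst_step; apply: (@step_iso _ _ _ _ id) => //.
Qed.

End Final.

Theorem corollary8p5 (alpha : Type) (tau : alpha -> alpha)
    (tau_invol : forall x, tau (tau x) = x) (a b : alpha) :
  (a = tau b ->
     forall f, homotopy_automorphism tau (w_ab a b) f <-> tau_equivariant_bij tau f) /\
  (a <> tau b ->
     forall f, homotopy_automorphism tau (w_ab a b) f <->
               (tau_equivariant_bij tau f /\ f a = a /\ f b = b)).
Proof.
split.
- move=> ab f; split; first by case.
  move=> [fb fe]; split => //.
  have bta : b = tau a by rewrite ab tau_invol.
  apply: (rst_trans _ _ _ (Nanoword [::] (fun _ => a))).
    by apply: (w_triv tau_invol (u := f a)) => //=; rewrite bta fe.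
  apply: rst_sym; apply: (w_triv tau_invol (u := a)) => //=.
- move=> ab f; split.
  + move=> [[fb fe] H]; split => //.
    exact: (fix_ab tau_invol ab fe (bij_inj fb) H).
  + move=> [[fb fe] [fa fb']]; split => //; apply: rst_step; apply: (@step_iso _ _ _ _ id).
    * exact: wf_all.
    * by move=> ? ? _ _.
    * by rewrite map_id.
    * by move=> e; rewrite !inE => /orP[/eqP->|/orP[/eqP->|/orP[/eqP->|/eqP->]]].
Qed.
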